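(* Let $3\le n\le k$ be integers and let $X$ be the discrete-time Markov chain on $\mathbb{N}^{n-1}$ described in the context. Fix $j\in\{1,\dots,n-1\}$ and let $\mathbf{x}_j=(0,\dots,0,x_{j+1},\dots,x_{n-1})$ with the first $j$ entries equal to $0$ and $x_i\ge1$ for $i=j+1,\dots,n-1$. Then for every $\mathbf{r}=(r_1,\dots,r_{n-1})\in E_j$, setting $\mathbf{r}(\mathbf{x}_j)=\mathbf{x}_j+\mathbf{r}\in S^\star$, $$q^\star(\mathbf{x}_j,\mathbf{r}(\mathbf{x}_j))=\binom{k-n+j+1}{k-n+1}\frac{(|\mathbf{r}|-1)!}{r_1!\cdots r_{n-1}!}\Big(\frac1k\Big)^{|\mathbf{r}|}\sum_{l=1}^{j}\mathds{1}_{\{r_l=1\}},$$ and $\sum_{\mathbf{r}\in E_j}q^\star(\mathbf{x}_j,\mathbf{r}(\mathbf{x}_j))=1$. Moreover, $q^\star(\mathbf{x}_j,\mathbf{x}')=0$ for every $\mathbf{x}'\in S^\star$ that is not of the form $\mathbf{x}_j+\mathbf{r}$ with $\mathbf{r}\in E_j$.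
   Context: $\mathbb{N}=\{0,1,2,\dots\}$, $|\mathbf{r}|=r_1+\dots+r_{n-1}$. $\mathbf{0}$, $\mathbf{1}$ are the all-zero and all-one vectors of dimension $n-1$, $\mathbf{e}_l$ the $l$-th unit vector. For $j=0,\dots,n-1$, $R_j$ is the set of $\mathbf{x}\in\mathbb{N}^{n-1}$ with exactly $j$ zero entries. $X$ is the Markov chain on $\mathbb{N}^{n-1}$ with nonzero transition probabilities: from $\mathbf{x}\in R_0$, to $\mathbf{x}-\mathbf{1}$ w.p. $\frac{k-(n-1)}{k}$ and to $\mathbf{x}+\mathbf{e}_l$ w.p. $\frac1k$ ($l=1,\dots,n-1$); from $\mathbf{x}\in R_j$, $1\le j\le n-2$, to $\mathbf{x}+\mathbf{e}_l$ w.p. $\frac{k-(n-1-j)}{kj}$ if $x_l=0$ and w.p. $\frac1k$ if $x_l\ge1$; from $\mathbf{0}$ to $\mathbf{e}_l$ w.p. $\frac1{n-1}$. Let $S=\{\mathbf{x}\in\mathbb{N}^{n-1}:x_i\ge1\ \forall i\}$, $S^c$ its complement in $\mathbb{N}^{n-1}$, and $S^\star=\{\mathbf{x}\in S:\mathbf{x}-\mathbf{1}\notin S\}$ (elements of $S$ with at least one entry equal to $1$). For $\mathbf{x}\in S^c$ and $\mathbf{y}\in S^\star$, $q^\star(\mathbf{x},\mathbf{y})$ is the probability that $X$ started at $\mathbf{x}$ first enters $S$ at the state $\mathbf{y}$. For $j=1,\dots,n-1$, $E_j$ is the set of $\mathbf{r}\in\mathbb{N}^{n-1}$ with $r_i\ge1$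 for $1\le i\le j$, $r_l\ge0$ for $j<l\le n-1$, and at least one of $r_1,\dots,r_j$ equal to $1$. *)

(* Defs.v *)
From HB Require Import structures.
From mathcomp Require Import all_boot all_order all_algebra.
From mathcomp Require Import all_classical all_reals all_analysis.
Set Implicit Arguments. Unset Strict Implicit. Unset Printing Implicit Defensive.
Import Order.TTheory GRing.Theory Num.Theory.
Local Open Scope ring_scope.

(* States: N^m with m = n-1; coordinate i+1 of the paper is index i : 'I_m. *)
Definition vec (m : nat) := {ffun 'I_m -> nat}.

Section Chain.
Variables (R : realType) (n k : nat).
Local Notation m := n.-1.

(* number of zero entries: x \in R_j  iff  nzeros x = j *)
Definition nzeros (x : vec m) : nat := #|[set i | x i == 0%N]|.
Definition incr (x : vec m) (l : 'I_m) : vec m := [ffun i => (x i + (i == l))%N].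
(* x - 1 (only used for x in R_0, where it is exact) *)
Definition decr (x : vec m) : vec m := [ffun i => (x i).-1].
Definition vadd (x r : vec m) : vec m := [ffun i => (x i + r i)%N].
Definition vnorm (r : vec m) : nat := (\sum_(i < m) r i)%N.

Definition inS (x : vec m) : bool := [forall i, (0 < x i)%N].
Definition inSstar (x : vec m) : bool := inS x && ~~ inS (decr x).

Definition trans (x y : vec m) : R :=
  let z := nzeros x in
  if z == 0%N then
    (if y == decr x then (k - m)%:R / k%:R
     else if [exists l, y == incr x l] then k%:R^-1 else 0)
  else if (z < m)%N then
    match [pick l | y == incr x l] with
    | Some l => if x l == 0%N then (k - (m - z))%:R / (k * z)%:R else k%:R^-1
    | None => 0
    end
  else (* x = 0 *)
    (if [exists l, y == incr x l] then m%:R^-1 else 0).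

(* All states reachable in one step (a superset of the support of trans x). *)
Definition succs (x : vec m) : seq (vec m) :=
  undup (decr x :: [seq incr x l | l <- enum 'I_m]).

(* hit N x y = P_x(X_1,...,X_N not in S, X_{N+1} = y in S):
   probability that the chain started at x first enters S at time N+1 at y. *)
Fixpoint hit (N : nat) (x y : vec m) : R :=
  match N with
  | 0%N => trans x y * (inS y)%:R
  | N'.+1 => \sum_(z <- succs x | ~~ inS z) trans x z * hit N' z y
  end.

Definition qstar (x y : vec m) : \bar R := (\sum_(N <oo) (hit N x y)%:E)%E.

(* E_j (paper indices 1..j are 'I_m indices 0..j-1) *)
Definition inEj (j : nat) (r : vec m) : bool :=
  [forall i : 'I_m, ((i < j)%N ==> (1 <= r i)%N)]
  && [exists l : 'I_m, ((l < j)%N && (r l == 1%N))].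

Definition qformula (j : nat) (r : vec m) : R :=
  'C(k - n + j + 1, k - n + 1)%:R
  * ((vnorm r).-1`!%:R / (\prod_(i < m) (r i)`!)%:R)
  * (k%:R^-1) ^+ vnorm r
  * (\sum_(l < m | (l < j)%N) (r l == 1%N))%:R.

End Chain.

Arguments nzeros {n} x.
Arguments incr {n} x l.
Arguments decr {n} x.
Arguments vadd {n} x r.
Arguments vnorm {n} r.
Arguments inS {n} x.
Arguments inSstar {n} x.
Arguments inEj {n} j r.
Arguments trans R n k x y : clear implicits.
Arguments hit R n k N x y : clear implicits.
Arguments qstar R n k x y : clear implicits.
Arguments qformula R n k j r : clear implicits.

(* Main.v *)
Require Import Defs.
From HB Require Import structures.
From mathcomp Require Import all_boot all_order all_algebra.
From mathcomp Require Import all_classical all_reals all_analysis.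
From mathcomp Require Import zify ring lra.
Import Order.TTheory GRing.Theory Num.Theory.
Local Open Scope ring_scope.
Set Implicit Arguments. Unset Strict Implicit. Unset Printing Implicit Defensive.


Section Basics.
Variable (n : nat).
Local Notation m := n.-1.

Lemma incrE (x : vec m) l i : incr x l i = (x i + (i == l))%N.
Proof. by rewrite /incr ffunE. Qed.

Lemma incr_inj (x : vec m) : injective (incr x).
Proof.
move=> l l' /ffunP /(_ l); rewrite !incrE eqxx => /eqP.
by rewrite eqn_add2l eq_sym => /eqP; case: eqP.
Qed.

Lemma decr_incr (x : vec m) l : decr x != incr x l.
Proof.
apply/eqP => /ffunP /(_ l); rewrite incrE ffunE eqxx addn1.
by case: (x l) => [|a] //= /eqP; rewrite ?ltn_eqF // eqn_leq ltnn.
Qed.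

Lemma succsE (x : vec m) : succs x = decr x :: [seq incr x l | l <- enum 'I_m].
Proof.
apply: undup_id => /=; apply/andP; split.
  by apply/mapP => -[l _] /eqP; rewrite (negbTE (decr_incr x l)).
by rewrite map_inj_uniq ?enum_uniq //; exact: incr_inj.
Qed.

Lemma inS_nz (x : vec m) : inS x = (nzeros x == 0%N).
Proof.
rewrite /inS /nzeros cards_eq0; apply/forallP/eqP => [H|H i].
  by apply/setP => i; rewrite !inE; move: (H i); case: (x i).
rewrite lt0n; apply/negP => /eqP hi.
by move/setP: H => /(_ i); rewrite !inE hi.
Qed.

Lemma nzeros_incr (x : vec m) l : nzeros (incr x l) = (nzeros x - (x l == 0%N))%N.
Proof.
rewrite /nzeros (cardsD1 l [set i | x i == 0%N]) inE.
have -> : [set i | incr x l i == 0%N] = [set i | x i == 0%N] :\ l.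
  apply/setP => i; rewrite !inE incrE; case: (eqVneq i l) => [->|h].
    by rewrite addn1.
  by rewrite addn0.
by case: (x l == 0%N); rewrite ?add1n ?subn1 ?add0n ?subn0.
Qed.

Lemma nzeros_le (x : vec m) : (nzeros x <= m)%N.
Proof. by rewrite /nzeros; apply: leq_trans (max_card _) _; rewrite card_ord. Qed.

Lemma nzeros_all (x : vec m) l : nzeros x = m -> x l = 0%N.
Proof.
move=> h; apply/eqP; have : [set i | x i == 0%N] = (finset.setT : {set 'I_m}).
  apply/eqP; rewrite eqEcard finset.subsetT finset.cardsT card_ord /=.
  by rewrite -{1}h /nzeros leqnn.
by move/setP/(_ l); rewrite !inE.
Qed.

End Basics.

Section Trans.
Variables (R : realType) (n k : nat).
Hypotheses (hn : (3 <= n)%N) (hk : (n <= k)%N).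
Local Notation m := n.-1.

Definition cc (x : vec m) (l : 'I_m) : R :=
  if x l == 0%N then (k - m + nzeros x)%:R / (k * nzeros x)%:R else k%:R^-1.

Lemma k_gt0 : (0 < k)%N. Proof. lia. Qed.
Lemma m_lt_k : (m < k)%N. Proof. lia. Qed.
Lemma kR_neq0 : (k%:R : R) != 0. Proof. by rewrite pnatr_eq0 -lt0n k_gt0. Qed.

Lemma trans_incr (x : vec m) l : (0 < nzeros x)%N -> trans R n k x (incr x l) = cc x l.
Proof.
move=> z0; rewrite /trans /cc; have -> : (nzeros x == 0%N) = false by lia.
have zm := nzeros_le x.
case: ltnP => hz.
  case: pickP => [l' /eqP /incr_inj <-|H]; last by have := H l; rewrite eqxx.
  by have -> : (k - (m - nzeros x) = k - m + nzeros x)%N by lia.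
have hzm : nzeros x = m by lia.
have -> : [exists l0, incr x l == incr x l0] by apply/existsP; exists l.
rewrite (nzeros_all l hzm) eqxx hzm.
have -> : (k - m + m = k)%N by have := m_lt_k; lia.
have m0 : (m%:R : R) != 0 by rewrite pnatr_eq0; lia.
by rewrite natrM invfM mulrA mulfV ?mul1r // kR_neq0.
Qed.

Lemma trans_other (x w : vec m) : (0 < nzeros x)%N -> (forall l, w != incr x l) ->
  trans R n k x w = 0.
Proof.
move=> z0 hw; rewrite /trans; have -> : (nzeros x == 0%N) = false by lia.
case: ltnP => hz.
  by case: pickP => [l' hl|//]; have := hw l'; rewrite hl.
case: existsP => [[l hl]|//]; by have := hw l; rewrite hl.
Qed.

Lemma sum_succs (x : vec m) (P : pred (vec m)) (g : vec m -> R) :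
  (0 < nzeros x)%N ->
  \sum_(z <- succs x | P z) trans R n k x z * g z =
  \sum_l (if P (incr x l) then cc x l * g (incr x l) else 0).
Proof.
move=> z0; rewrite succsE big_cons.
rewrite trans_other // ?mul0r; last by move=> l; exact: decr_incr.
rewrite ?add0r big_map big_enum_cond /= big_mkcond /= if_same.
by apply: eq_bigr => l _; rewrite trans_incr.
Qed.

Lemma cc_ge0 (x : vec m) l : 0 <= cc x l.
Proof. by rewrite /cc; case: ifP => _; rewrite ?divr_ge0 ?invr_ge0 ?ler0n. Qed.

Lemma cc_sum1 (x : vec m) : (0 < nzeros x)%N -> \sum_l cc x l = 1.
Proof.
move=> z0; rewrite (bigID (fun l => x l == 0%N)) /=.
rewrite (eq_bigr (fun=> (k - m + nzeros x)%:R / (k * nzeros x)%:R)); last first.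
  by move=> l h; rewrite /cc h.
rewrite [X in _ + X](eq_bigr (fun=> k%:R^-1)); last first.
  by move=> l /negbTE h; rewrite /cc h.
rewrite !sumr_const.
have -> : #|[pred i | x i == 0%N]| = nzeros x by rewrite /nzeros cardsE.
have -> : #|[pred i | x i != 0%N]| = (m - nzeros x)%N.
  have h1 := cardC [pred i : 'I_m | x i == 0%N]; rewrite card_ord in h1.
  have h2 : #|[pred i | x i != 0%N]| = #|[predC [pred i : 'I_m | x i == 0%N]]|.
    by apply: eq_card => i; rewrite !inE.
  have h3 : nzeros x = #|[pred i : 'I_m | x i == 0%N]| by rewrite /nzeros cardsE.
  rewrite h2; apply: (@addnI (nzeros x)); rewrite subnKC ?nzeros_le // h3; exact: h1.
have zm := nzeros_le x; have mk := m_lt_k.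
move: (nzeros x) z0 zm => z z0 zm.
rewrite -(mulr_natr _ z) -(mulr_natr _ (m - z)) natrM natrB; last lia.
have z0' : z%:R != 0 :> R by rewrite pnatr_eq0; lia.
have := kR_neq0 => k0.
rewrite natrD natrB; last lia.
by field; apply/andP.
Qed.

End Trans.


Section Hit.
Variables (R : realType) (n k : nat).
Hypotheses (hn : (3 <= n)%N) (hk : (n <= k)%N).
Local Notation m := n.-1.
Local Notation cc := (@cc R n k).
Local Notation hit := (hit R n k).

Lemma hit_S N (x w : vec m) : (0 < nzeros x)%N ->
  hit N.+1 x w = \sum_l (if ~~ inS (incr x l) then cc x l * hit N (incr x l) w else 0).
Proof. by move=> z0; rewrite /= (sum_succs hn hk (fun z => ~~ inS z) (fun z => hit N z w) z0). Qed.

Lemma hit_0 (x w : vec m) : (0 < nzeros x)%N ->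
  hit 0 x w = \sum_l (if w == incr x l then cc x l * (inS w)%:R else 0).
Proof.
move=> z0 /=; case: (pickP (fun l => w == incr x l)) => [l /eqP -> | H].
  rewrite (trans_incr R hn hk _ z0) (bigD1 l) //= eqxx big1 ?addr0 // => l' hl'.
  by rewrite (inj_eq (@incr_inj _ x)) eq_sym (negbTE hl').
rewrite (trans_other R hn hk z0) ?mul0r ?big1 // => l; last by rewrite H.
by move=> _; rewrite H.
Qed.

Lemma hit_ge0 N (x w : vec m) : 0 <= hit N x w.
Proof.
elim: N x w => [|N IH] x w /=.
  apply: mulr_ge0; last exact: ler0n.
  rewrite /trans; case: ifP => _; first (case: ifP => _;
     [ rewrite divr_ge0 ?ler0n // | case: ifP => _; rewrite ?invr_ge0 ?ler0n //]).
  case: ifP => _; last by case: ifP => _; rewrite ?invr_ge0 ?ler0n.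
  case: pickP => [l _|//]; case: ifP => _; rewrite ?divr_ge0 ?invr_ge0 ?ler0n //.
apply: sumr_ge0 => z _; apply: mulr_ge0 => //.
rewrite /trans; case: ifP => _; first (case: ifP => _;
     [ rewrite divr_ge0 ?ler0n // | case: ifP => _; rewrite ?invr_ge0 ?ler0n //]).
case: ifP => _; last by case: ifP => _; rewrite ?invr_ge0 ?ler0n.
case: pickP => [l _|//]; case: ifP => _; rewrite ?divr_ge0 ?invr_ge0 ?ler0n //.
Qed.

End Hit.

Section Dif.
Variable (n : nat).
Local Notation m := n.-1.

Definition dif (y w : vec m) : vec m := [ffun i => (w i - y i)%N].
Definition lev (y w : vec m) : bool := [forall i, (y i <= w i)%N].
Definition cnt (y w : vec m) : nat := (\sum_l ((y l == 0%N) && (w l == 1%N)))%N.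

Lemma levP (y w : vec m) : reflect (forall i, (y i <= w i)%N) (lev y w).
Proof. exact: forallP. Qed.

Lemma lev_incr (y w : vec m) l : lev (incr y l) w = lev y w && (y l < w l)%N.
Proof.
apply/levP/andP => [H|[/levP H1 H2] i].
  split; last by have := H l; rewrite incrE eqxx addn1.
  by apply/levP => i; apply: leq_trans (H i); rewrite incrE leq_addr.
rewrite incrE; case: eqP => [->|_]; by rewrite ?addn1 ?addn0.
Qed.

Lemma difE (y w : vec m) i : dif y w i = (w i - y i)%N.
Proof. by rewrite ffunE. Qed.

Lemma dif_incr (y w : vec m) l i : dif (incr y l) w i = (dif y w i - (i == l))%N.
Proof. by rewrite !difE incrE subnDA. Qed.

Lemma vnorm_incr (y w : vec m) l : (y l < w l)%N ->
  vnorm (dif y w) = (vnorm (dif (incr y l) w)).+1.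
Proof.
move=> h; rewrite /vnorm (bigD1 l) //= [in RHS](bigD1 l) //= dif_incr eqxx.
rewrite -addSn; congr addn.
  by rewrite difE subn1 prednK // subn_gt0.
by apply: eq_bigr => i hi; rewrite dif_incr (negbTE hi) subn0.
Qed.

Lemma prod_incr (y w : vec m) l : (y l < w l)%N ->
  (\prod_i (dif (incr y l) w i)`! * dif y w l)%N = (\prod_i (dif y w i)`!)%N.
Proof.
move=> h; rewrite (bigD1 l) //= [in RHS](bigD1 l) //= dif_incr eqxx.
have -> : dif y w l = (dif y w l - 1).+1 by rewrite subn1 prednK // difE subn_gt0.
rewrite subSS subn0 (eq_bigr (fun i => (dif y w i)`!)); last first.
  by move=> i hi; rewrite dif_incr (negbTE hi) subn0.
rewrite factS; set P := (\prod_(_ < _ | _) _)%N; set a := (dif y w l - 1)%N.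
by rewrite mulnC mulnA.
Qed.

Lemma cnt_incr (y w : vec m) l :
  (cnt (incr y l) w + ((y l == 0%N) && (w l == 1%N)))%N = cnt y w.
Proof.
rewrite /cnt (bigD1 l) //= [in RHS](bigD1 l) //= incrE eqxx addn1 /= add0n addnC.
congr addn; apply: eq_bigr => i hi; by rewrite incrE (negbTE hi) addn0.
Qed.

Lemma one_step (y w : vec m) : lev y w -> vnorm (dif y w) = 1%N ->
  exists l, w = incr y l.
Proof.
move=> /levP hl hv.
case: (pickP (fun i => dif y w i != 0%N)) => [l hl0|H]; last first.
  move: hv; rewrite /vnorm big1 // => i _; by have := H i; move/negbFE/eqP.
exists l; move: hv; rewrite /vnorm (bigD1 l) //= => hv.
have h1 : dif y w l = 1%N by move: hl0 hv; case: (dif y w l) => [|[|a]] //=; lia.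
have h2 : (\sum_(i | i != l) dif y w i)%N = 0%N by move: hv; rewrite h1 => -[].
apply/ffunP => i; rewrite incrE; case: (eqVneq i l) => [->|hi].
  by move: h1 (hl l); rewrite difE addn1 => h1 h3; rewrite -addn1 -h1 subnKC.
move/eqP: h2; rewrite sum_nat_eq0 => /forallP /(_ i); rewrite hi /= difE addn0.
by rewrite subn_eq0 => h; apply/eqP; rewrite eqn_leq h hl.
Qed.

End Dif.

Section Phi.
Variables (R : realType) (n k : nat).
Hypotheses (hn : (3 <= n)%N) (hk : (n <= k)%N).
Local Notation m := n.-1.
Local Notation cc := (@cc R n k).
Local Notation hit := (hit R n k).

Definition Kz (z : nat) : R := 'C(k - m + z, z)%:R.

Definition Phi N (y w : vec m) : R :=
  if [&& lev y w, inS w & vnorm (dif y w) == N.+1] then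
    Kz (nzeros y) * k%:R^-1 ^+ N.+1 * (N`!%:R / (\prod_i (dif y w i)`!)%:R)
      * (cnt y w)%:R
  else 0.

Lemma prod_fact_neq0 (y w : vec m) : (\prod_i (dif y w i)`!)%:R != 0 :> R.
Proof. by rewrite pnatr_eq0 -lt0n prodn_gt0 // => i; exact: fact_gt0. Qed.

Lemma cc_Kz (y : vec m) l : (0 < nzeros (incr y l))%N ->
  cc y l * Kz (nzeros (incr y l)) = Kz (nzeros y) / k%:R.
Proof.
rewrite nzeros_incr /cc /Kz; have mk := m_lt_k hn hk; have k0 := kR_neq0 R hn hk.
case: eqP => _; last by rewrite subn0 mulrC.
move=> h; set z := nzeros y; have -> : z = (z - 1).+1 by lia.
have -> : ((z - 1).+1 - true = z - 1)%N by lia.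
set z' := (z - 1)%N.
have e := mul_bin_diag (k - m + z'.+1) z'.
move: e; have -> : ((k - m + z'.+1).-1 = k - m + z')%N by lia.
move/(congr1 (fun a => a%:R : R)); rewrite !natrM => e.
have z0 : (z'.+1%:R : R) != 0 by rewrite pnatr_eq0.
have -> : forall a A b c : R, a / (b * c) * A = (a * A) / (b * c) by move=> *; rewrite mulrAC.
rewrite e; by field; apply/andP.
Qed.

Lemma Phi_step N (y w : vec m) : (0 < nzeros y)%N ->
  \sum_l (if ~~ inS (incr y l) then cc y l * Phi N (incr y l) w else 0)
  = Phi N.+1 y w.
Proof.
move=> z0.
set P := [&& lev y w, inS w & vnorm (dif y w) == N.+2].
set K := Kz (nzeros y) * k%:R^-1 ^+ N.+2 * (N`!%:R / (\prod_i (dif y w i)`!)%:R).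
have k0 := kR_neq0 R hn hk.
have term : forall l, (if ~~ inS (incr y l) then cc y l * Phi N (incr y l) w else 0)
   = if P then K * ((dif y w l)%:R * ((cnt y w)%:R - ((y l == 0%N) && (w l == 1%N))%:R))
     else 0.
  move=> l; case: ifP => hS /=.
    rewrite inS_nz in hS.
    have z'0 : (0 < nzeros (incr y l))%N by lia.
    case hl: (y l < w l)%N; last first.
      rewrite /Phi lev_incr hl andbF /= mulr0.
      case: ifP => // /and3P[/levP hle _ _].
      have -> : dif y w l = 0%N by rewrite difE; apply/eqP; rewrite subn_eq0 leqNgt hl.
      by rewrite mul0r mulr0.
    rewrite /Phi lev_incr hl andbT /P (vnorm_incr hl) eqSS.
    case: ifP => _; last by rewrite mulr0.
    rewrite /K !(mulrA (cc y l)) (cc_Kz z'0) -(prod_incr hl) -(cnt_incr y w l) natrM natrD.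
    have p0 := prod_fact_neq0 (incr y l) w.
    have d0 : (dif y w l)%:R != 0 :> R by rewrite pnatr_eq0 difE subn_eq0 -ltnNge hl.
    set E := k%:R^-1 ^+ N.+1; rewrite [_ ^+ N.+2]exprS -/E.
    set A := Kz _; set B := (\prod_i _)%:R; set D := (dif y w l)%:R; set C := (cnt _ _)%:R.
    by field; rewrite p0 d0 k0.
  case: ifP => // _.
  have hpos : forall i, i != l -> (0 < y i)%N.
    move=> i hi; move/forallP: hS => /(_ i); by rewrite incrE (negbTE hi) addn0.
  suff -> : cnt y w = ((y l == 0%N) && (w l == 1%N)) by rewrite subrr !mulr0.
  rewrite /cnt (bigD1 l) //= big1 ?addn0 // => i hi.
  by have := hpos i hi; case: (y i).
rewrite (eq_bigr _ (fun l _ => term l)).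
rewrite /Phi -/P; case hP: P; last by rewrite big1.
rewrite -mulr_sumr.
move: hP => /and3P[/levP hle hSw /eqP hv].
have s1 : \sum_l ((dif y w l)%:R : R) = N.+2%:R by rewrite -natr_sum -/(vnorm _) hv.
have s2 : \sum_l ((dif y w l)%:R * ((y l == 0%N) && (w l == 1%N))%:R : R) = (cnt y w)%:R.
  rewrite /cnt natr_sum; apply: eq_bigr => l _.
  case: (y l =P 0%N) => [e|_]; last by rewrite mulr0.
  case: (w l =P 1%N) => [e'|_]; last by rewrite mulr0.
  by rewrite difE e e' mulr1.
rewrite (eq_bigr (fun l => (dif y w l)%:R * (cnt y w)%:R -
   (dif y w l)%:R * ((y l == 0%N) && (w l == 1%N))%:R)); last by move=> l _; rewrite mulrBr.
rewrite sumrB -mulr_suml s1 s2 /K factS natrM.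
have p0 := prod_fact_neq0 y w.
set A := Kz _; set B := (\prod_i _)%:R; set C := (cnt _ _)%:R.
set E := k%:R^-1 ^+ N.+2; rewrite /E exprS; by field; rewrite ?p0 ?k0.
Qed.

Lemma hit_Phi N (y w : vec m) : (0 < nzeros y)%N -> hit N y w = Phi N y w.
Proof.
elim: N y w => [|N IH] y w z0; last first.
  rewrite hit_S // -Phi_step //; apply: eq_bigr => l _; case: ifP => // hS.
  by rewrite IH //; rewrite inS_nz in hS; lia.
rewrite hit_0 //; case: (pickP (fun l => w == incr y l)) => [l /eqP -> | H]; last first.
  rewrite big1; last by move=> l _; rewrite H.
  rewrite /Phi; case: ifP => // /and3P[hle _ /eqP hv].
  by have [l e] := one_step hle hv; have := H l; rewrite e eqxx.
rewrite (bigD1 l) //= eqxx big1 ?addr0; last first.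
  by move=> l' hl'; rewrite (inj_eq (@incr_inj _ y)) eq_sym (negbTE hl').
have hd : forall i, dif y (incr y l) i = (i == l) :> nat.
  by move=> i; rewrite difE incrE addKn.
have hle : lev y (incr y l) by apply/levP => i; rewrite incrE leq_addr.
have hv : vnorm (dif y (incr y l)) = 1%N.
  rewrite /vnorm (bigD1 l) //= hd eqxx big1 // => i hi; by rewrite hd (negbTE hi).
have hp : (\prod_i (dif y (incr y l) i)`!)%N = 1%N.
  by rewrite big1 // => i _; rewrite hd; case: (i == l).
have hc : cnt y (incr y l) = (y l == 0%N) :> nat.
  rewrite /cnt (bigD1 l) //= incrE eqxx addn1 big1 ?addn0.
    by case: (y l).
  move=> i hi; rewrite incrE (negbTE hi) addn0; by case: (y i) => [|[]].
rewrite /Phi hle hv hp hc /= eqxx andbT.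
case: ifP => hS; last by rewrite mulr0.
move: (hS); rewrite inS_nz nzeros_incr => hz.
have hy : y l = 0%N by move: hz; case: (y l) => //= a; rewrite subn0; lia.
have h1 : nzeros y = 1%N by move: hz; rewrite hy eqxx /=; lia.
rewrite /cc /Kz hy h1 eqxx /= bin1 mulr1 muln1 mulr1 expr1 fact0 divr1 mulr1.
done.
Qed.

End Phi.


Section EsumHelpers.
Variable R : realType.
Local Open Scope ereal_scope.

Lemma esumZ (T : choiceType) (I : set T) (a : T -> \bar R) (r : R) :
  (0 <= r)%R -> (forall i, I i -> 0 <= a i) ->
  \esum_(i in I) (r%:E * a i) = r%:E * \esum_(i in I) a i.
Proof.
move=> r0 a0; rewrite /esum -ereal_supZl //; last first.
  apply/set0P; exists 0; exists set0; first exact: fsets_set0.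
  by rewrite fsbig_set0.
have key : forall A, fsets I A ->
    \sum_(i \in A) (r%:E * a i) = r%:E * \sum_(i \in A) a i.
  move=> A [finA sA]; rewrite !fsbig_finite // big_seq [in RHS]big_seq.
  rewrite ge0_sume_distrr // => i; rewrite in_fset_set // inE => /sA; exact: a0.
congr ereal_sup; apply/seteqP; split => x.
  by move=> [A hA <-]; exists (\sum_(i \in A) a i); [exists A | rewrite key].
by move=> [y [A hA <-] <-]; exists A => //; rewrite key.
Qed.

Lemma esum_point (T : choiceType) (t : T) (a : T -> \bar R) :
  0 <= a t -> (forall i, i != t -> a i = 0) -> \esum_(i in [set: T]) a i = a t.
Proof.
move=> a0 h; rewrite -(esum_set1 a0); rewrite [RHS]esum_mkcond.
apply: eq_esum => i _; case: (eqVneq i t) => [->|hi].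
  by rewrite ifT // inE.
by rewrite h // ifF //; apply/negP; rewrite inE => hh; move: hi; rewrite hh eqxx.
Qed.

Lemma series_point (N0 : nat) (a : nat -> \bar R) :
  (forall N, 0 <= a N) -> (forall N, N != N0 -> a N = 0) -> \sum_(N <oo) a N = a N0.
Proof. by move=> a0 h; rewrite nneseries_esumT // (esum_point (t := N0)). Qed.

Lemma esum_swap (T1 T2 : choiceType) (a : T1 -> T2 -> \bar R) :
  (forall i j, 0 <= a i j) ->
  \esum_(i in [set: T1]) \esum_(j in [set: T2]) a i j =
  \esum_(j in [set: T2]) \esum_(i in [set: T1]) a i j.
Proof.
move=> a0; rewrite !esum_esum //.
rewrite (reindex_esum ([set: T2]%classic `*`` (fun=> [set: T1]%classic)) _ (fun x => (x.2, x.1))) //.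
split => //=.
  by move=> [i1 i2] [j1 j2] /= _ _ [] -> ->.
by move=> [i1 i2] _ /=; exists (i2, i1).
Qed.

End EsumHelpers.

Section Surv.
Variables (R : realType) (n k : nat).
Hypotheses (hn : (3 <= n)%N) (hk : (n <= k)%N).
Local Notation m := n.-1.
Local Notation cc := (@cc R n k).
Local Notation hit := (hit R n k).

Fixpoint surv N (y : vec m) : R :=
  if N is N'.+1 then
    \sum_l (if ~~ inS (incr y l) then cc y l * surv N' (incr y l) else 0)
  else 1.

Lemma esum_hit N (y : vec m) : (0 < nzeros y)%N ->
  \esum_(w in [set: vec m]) (hit N y w)%:E = (surv N y - surv N.+1 y)%:E.
Proof.
elim: N y => [|N IH] y z0.
  under eq_esum do rewrite (hit_0 R hn hk _ z0) -sumEFin.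
  rewrite esum_sum; last first.
    by move=> w l _ _; case: ifP => _; rewrite lee_fin ?mulr_ge0 ?cc_ge0 ?ler0n.
  rewrite (eq_bigr (fun l => (cc y l * (inS (incr y l))%:R)%:E)); last first.
    move=> l _; rewrite (esum_point (t := incr y l)).
    - by rewrite eqxx.
    - by rewrite eqxx lee_fin mulr_ge0 ?cc_ge0 ?ler0n.
    - by move=> w /negbTE ->.
  rewrite sumEFin /=; congr EFin; apply/eqP; rewrite eq_sym subr_eq -big_split /=.
  rewrite (eq_bigr (fun l => cc y l)) ?(cc_sum1 R hn hk z0) //.
  by move=> l _; case: (inS _) => /=; rewrite ?mulr1 ?mulr0 ?addr0 ?add0r.
under eq_esum do rewrite (hit_S R hn hk _ _ z0) -sumEFin.
rewrite esum_sum; last first.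
  move=> w l _ _; case: ifP => _; rewrite lee_fin ?mulr_ge0 ?cc_ge0 //.
  exact: hit_ge0.
have -> : surv N.+1 y - surv N.+2 y = \sum_l (if ~~ inS (incr y l) then
    cc y l * (surv N (incr y l) - surv N.+1 (incr y l)) else 0).
  rewrite /= -sumrB; apply: eq_bigr => l _; case: ifP => _; by rewrite ?mulrBr ?subr0.
rewrite -sumEFin; apply: eq_bigr => l _; case: ifP => hS; last by rewrite esum1.
under eq_esum do rewrite EFinM.
rewrite esumZ ?cc_ge0 //; last by move=> w _; rewrite lee_fin hit_ge0.
by rewrite IH ?EFinM //; move: hS; rewrite inS_nz; lia.
Qed.

End Surv.

Section F.
Variables (R : realType) (n k : nat).
Hypotheses (hn : (3 <= n)%N) (hk : (n <= k)%N).
Local Notation m := n.-1.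
Local Notation cc := (@cc R n k).
Local Notation surv := (@surv R n k).

Definition pz (z : nat) : R := (k - m + z)%:R / k%:R.

Fixpoint ff N z : R :=
  if N is N'.+1 then
    (if z is z'.+1 then pz z * ff N' z' + (1 - pz z) * ff N' z else 0)
  else (z != 0%N)%:R.

Lemma ff0 N : ff N 0 = 0.
Proof. by case: N. Qed.

Lemma card_z (y : vec m) : #|[pred i | y i == 0%N]| = nzeros y.
Proof. by rewrite /nzeros cardsE. Qed.

Lemma card_nz (y : vec m) : #|[pred i | y i != 0%N]| = (m - nzeros y)%N.
Proof.
have h1 := cardC [pred i : 'I_m | y i == 0%N]; rewrite card_ord in h1.
have h2 : #|[pred i | y i != 0%N]| = #|[predC [pred i : 'I_m | y i == 0%N]]|.
  by apply: eq_card => i; rewrite !inE.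
have h3 : nzeros y = #|[pred i : 'I_m | y i == 0%N]| by rewrite /nzeros cardsE.
rewrite h2; apply: (@addnI (nzeros y)); rewrite subnKC ?nzeros_le // h3; exact: h1.
Qed.

Lemma surv_ff N (y : vec m) : (0 < nzeros y)%N -> surv N y = ff N (nzeros y).
Proof.
elim: N y => [|N IH] y z0 /=; first by have -> : (nzeros y != 0%N) by lia.
rewrite (eq_bigr (fun l => cc y l * ff N (nzeros (incr y l)))); last first.
  move=> l _; case: ifP => hS; first by rewrite IH //; move: hS; rewrite inS_nz; lia.
  by move: hS => /negbFE; rewrite inS_nz => /eqP ->; rewrite ff0 mulr0.
rewrite (bigID (fun l => y l == 0%N)) /=.
rewrite (eq_bigr (fun=> (k - m + nzeros y)%:R / (k * nzeros y)%:R * ff N (nzeros y).-1)); last first.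
  by move=> l h; rewrite /cc h nzeros_incr h subn1.
rewrite [X in _ + X](eq_bigr (fun=> k%:R^-1 * ff N (nzeros y))); last first.
  by move=> l /negbTE h; rewrite /cc h nzeros_incr h subn0.
rewrite !sumr_const card_z card_nz.
have zm := nzeros_le y; have mk := m_lt_k hn hk.
move: (nzeros y) z0 zm => z z0 zm; case: z z0 zm => // z' _ zm /=.
rewrite /pz -(mulr_natr _ z'.+1) -(mulr_natr _ (m - z'.+1)).
have z0' : (z'.+1%:R : R) != 0 by rewrite pnatr_eq0.
have := kR_neq0 R hn hk => k0.
rewrite natrB // natrM natrD natrB; last lia.
by field; apply/andP.
Qed.

Lemma pz_bounds z : (0 < z <= m)%N -> 0 < pz z <= 1.
Proof.
move=> /andP[z0 zm]; have mk := m_lt_k hn hk; have k0 := kR_neq0 R hn hk.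
rewrite /pz divr_gt0 ?ltr0n /=; [|lia|lia].
by rewrite ler_pdivrMr ?ltr0n ?mul1r ?ler_nat; lia.
Qed.

Lemma ff_bounds N z : (z <= m)%N -> 0 <= ff N z <= 1.
Proof.
elim: N z => [|N IH] z zm /=; first by case: (z != 0%N); rewrite /= ?lexx ?ler01.
case: z zm => [|z] zm; first by rewrite lexx ler01.
have /andP[p0 p1] := pz_bounds (z := z.+1) zm.
have /andP[a0 a1] := IH z (ltnW zm); have /andP[b0 b1] := IH z.+1 zm.
have p0' := ltW p0; have q0 : 0 <= 1 - pz z.+1 by rewrite subr_ge0.
apply/andP; split; first by rewrite addr_ge0 // mulr_ge0.
have h1 := ler_wpM2l p0' a1; have h2 := ler_wpM2l q0 b1; rewrite !mulr1 in h1 h2.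
lra.
Qed.

Lemma ff_lim z : (z <= m)%N -> forall eps : R, 0 < eps ->
  exists M, forall N, (M <= N)%N -> ff N z < eps.
Proof.
elim: z => [|z IH] zm eps e0; first by exists 0%N => N _; rewrite ff0.
have e2 : 0 < eps / 2 by rewrite divr_gt0.
have [M0 hM0] := IH (ltnW zm) (eps / 2) e2.
have /andP[p0 p1] := pz_bounds (z := z.+1) zm.
set p := pz z.+1 in p0 p1 *.
set q := p * (eps / 2).
have q0 : 0 < q by rewrite mulr_gt0.
have persist : forall N0, (M0 <= N0)%N -> ff N0 z.+1 < eps ->
    forall N, (N0 <= N)%N -> ff N z.+1 < eps.
  move=> N0 h0 hf N /subnK <-; elim: (N - N0)%N => [|t IHt] /=; first by rewrite add0n.
  rewrite -/p.
  have ha := hM0 (t + N0)%N (leq_trans h0 (leq_addl _ _)).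
  have hb := IHt.
  have h1 : p * ff (t + N0) z < p * eps by rewrite ltr_pM2l //; lra.
  have h2 : (1 - p) * ff (t + N0) z.+1 <= (1 - p) * eps.
    by rewrite ler_wpM2l ?subr_ge0 // ltW.
  have : p * eps + (1 - p) * eps = eps by ring.
  lra.
have claim : forall t, (exists2 N, (M0 <= N)%N & ff N z.+1 < eps) \/
    ff (M0 + t) z.+1 <= 1 - t%:R * q.
  elim => [|t IHt].
    by right; rewrite mul0r subr0 addn0; have /andP[] := ff_bounds M0 zm.
  case: IHt => [h|h]; first by left.
  case: (ltrP (ff (M0 + t) z.+1) eps) => hlt.
    by left; exists (M0 + t)%N => //; exact: leq_addr.
  right; rewrite addnS /= -/p.
  have ha := hM0 (M0 + t)%N (leq_addr _ _).
  have h' : q <= p * ff (M0 + t) z.+1 - p * ff (M0 + t) z.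
    by rewrite /q -mulrBr ler_wpM2l ?ltW //; lra.
  rewrite mulrBl mul1r -natr1 mulrDl mul1r.
  lra.
have qi : 0 <= q^-1 by rewrite invr_ge0 ltW.
set t := Num.Def.archi_bound q^-1.
have ht := archi_boundP qi; rewrite -/t in ht.
have htq : 1 < t%:R * q by rewrite -ltr_pdivrMr // div1r.
case: (claim t) => [[N0 h0 hf]|h]; first by exists N0; exact: persist.
have /andP[f0 _] := ff_bounds (M0 + t) zm.
lra.
Qed.

End F.


Section Total.
Variables (R : realType) (n k : nat).
Hypotheses (hn : (3 <= n)%N) (hk : (n <= k)%N).
Local Notation m := n.-1.
Local Notation surv := (@surv R n k).
Local Notation hit := (hit R n k).

Lemma total_hit (y : vec m) : (0 < nzeros y)%N ->
  (\sum_(N <oo) \esum_(w in [set: vec m]) (hit N y w)%:E = 1)%E.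
Proof.
move=> z0.
rewrite (eq_eseriesr (g := fun N => (surv N y - surv N.+1 y)%:E)); last first.
  by move=> N _; rewrite esum_hit.
have ps : forall M, (\sum_(0 <= N < M) (surv N y - surv N.+1 y)%:E)%E = (1 - surv M y)%:E.
  move=> M; rewrite sumEFin; congr EFin.
  rewrite (eq_bigr (fun N => - (surv N.+1 y - surv N y))); last by move=> N _; rewrite opprB.
  by rewrite sumrN telescope_sumr // opprB.
apply: cvg_lim => //.
have -> : (fun M => (\sum_(0 <= N < M) (surv N y - surv N.+1 y)%:E)%E) =
    (fun M => (1 - surv M y)%:E) by apply: funext => M; exact: ps.
apply/neq0_fine_cvgP; first exact: oner_neq0.
apply/cvgrPdist_lt => eps e0.
have [M hM] := ff_lim hn hk (nzeros_le y) e0.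
exists M => // N /= hN.
rewrite opprB addrC subrK (surv_ff R hn hk _ z0).
have /andP[f0 _] := ff_bounds R hn hk N (nzeros_le y).
by rewrite ger0_norm //; exact: hM.
Qed.

End Total.


Lemma card_lt m j : (j <= m)%N -> #|[set i : 'I_m | (i < j)%N]| = j.
Proof.
move=> hj.
have -> : [set i : 'I_m | (i < j)%N] = widen_ord hj @: [set: 'I_j]%SET.
  apply/setP => i; rewrite inE; apply/idP/imsetP => [hi|[i' _ ->]] /=.
    by exists (Ordinal hi); [rewrite inE | apply: val_inj].
  exact: ltn_ord.
rewrite card_imset ?finset.cardsT ?card_ord //.
by move=> a b h; apply: val_inj; exact: (congr1 val h).
Qed.

Section Main.
Variables (R : realType) (n k j : nat) (x : vec n.-1).
Hypotheses (hn : (3 <= n)%N) (hk : (n <= k)%N) (hj : (1 <= j <= n.-1)%N).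
Hypotheses (hx0 : forall i : 'I_n.-1, (i < j)%N -> x i = 0%N)
           (hx1 : forall i : 'I_n.-1, (j <= i)%N -> (1 <= x i)%N).
Local Notation m := n.-1.

Lemma x_zero i : (x i == 0%N) = (i < j)%N.
Proof.
case: (ltnP i j) => h; first by rewrite hx0.
by have := hx1 h; case: (x i).
Qed.

Lemma nz_x : nzeros x = j.
Proof.
rewrite /nzeros -(@card_lt m j); last by case/andP: hj.
by apply: eq_card => i; rewrite !inE x_zero.
Qed.

Lemma nz_x_pos : (0 < nzeros x)%N.
Proof. by rewrite nz_x; case/andP: hj. Qed.

Lemma part1 r : inEj j r -> inSstar (vadd x r).
Proof.
case/andP => /forallP h1 /existsP [l /andP [hl /eqP hr]].
apply/andP; split.
  apply/forallP => i; rewrite ffunE; case: (ltnP i j) => hi.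
    by have := h1 i; rewrite hi /=; lia.
  by have := hx1 hi; lia.
apply/negP => /forallP /(_ l); rewrite !ffunE hx0 // hr; by case.
Qed.

Lemma Phi_nz N w : Phi R k N x w != 0 -> exists2 r, inEj j r & w = vadd x r.
Proof.
rewrite /Phi; case: ifP => [/and3P [/levP hle hS _]|]; last by rewrite eqxx.
case: (boolP (cnt x w == 0%N)) => [/eqP -> | hc]; first by rewrite mulr0 eqxx.
move=> _; exists (dif x w); last by apply/ffunP => i; rewrite !ffunE subnKC.
apply/andP; split.
  apply/forallP => i; apply/implyP => hi; rewrite difE hx0 // subn0.
  by move/forallP: hS => /(_ i).
move: hc; rewrite /cnt sum_nat_eq0 => /forallPn [l] /=.
case: (x l =P 0%N) => // h0; case: (w l =P 1%N) => // h1 _.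
apply/existsP; exists l; rewrite -x_zero difE h0 h1 eqxx.
done.
Qed.

Lemma qstarE w : qstar R n k x w = (\sum_(N <oo) (Phi R k N x w)%:E)%E.
Proof.
by apply: eq_eseriesr => N _; rewrite (hit_Phi R hn hk _ _ nz_x_pos).
Qed.

Lemma qstar_zero w : ~ (exists2 r, inEj j r & w = vadd x r) -> qstar R n k x w = 0%E.
Proof.
move=> h; rewrite qstarE (eq_eseriesr (g := fun=> 0%E)); last first.
  move=> N _; case: (eqVneq (Phi R k N x w) 0) => [->//|/Phi_nz]; by [].
by rewrite (series_point (N0 := 0%N)).
Qed.

Lemma part2 r : inEj j r -> qstar R n k x (vadd x r) = (qformula R n k j r)%:E.
Proof.
move=> hr; have /andP[hSw _] := part1 hr.
have hd : dif x (vadd x r) = r by apply/ffunP => i; rewrite difE ffunE addKn.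
have hle : lev x (vadd x r) by apply/levP => i; rewrite ffunE leq_addr.
have hv : (0 < vnorm r)%N.
  case/andP: hr => _ /existsP [l /andP [_ /eqP hl]].
  by rewrite /vnorm (bigD1 l) //= hl.
rewrite qstarE (series_point (N0 := (vnorm r).-1)); first last.
- move=> N hN; rewrite /Phi hd ifF //; apply/negbTE.
  rewrite !negb_and; apply/orP; right; apply/orP; right.
  by apply: contra hN => /eqP ->.
- by move=> N; rewrite lee_fin -(hit_Phi R hn hk _ _ nz_x_pos); exact: hit_ge0.
rewrite /Phi hle hSw hd prednK // eqxx /= nz_x /Kz /qformula.
have eb : 'C(k - m + j, j) = 'C(k - n + j + 1, k - n + 1).
  have e1 : (k - m + j = k - n + j + 1)%N by lia.
  have e2 : (k - n + 1 = (k - n + j + 1) - j)%N by lia.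
  by rewrite e1 e2 bin_sub //; lia.
have ec : cnt x (vadd x r) = (\sum_(l < m | (l < j)%N) (r l == 1%N))%N.
  rewrite /cnt [RHS]big_mkcond /=; apply: eq_bigr => l _; rewrite ffunE x_zero.
  by case: ltnP => h //=; rewrite hx0 // add0n.
rewrite eb ec; congr EFin; congr (_ * _); exact: mulrAC.
Qed.

Lemma part3 : esum [set r : vec m | inEj j r] (fun r => qstar R n k x (vadd x r)) = 1%E.
Proof.
rewrite -(esum_image [set r | inEj j r] (vadd x) (qstar R n k x)); last first.
  move=> a b _ _ /ffunP h; apply/ffunP => i; have := h i; rewrite !ffunE; exact: addnI.
rewrite esum_mkcond.
rewrite (eq_esum (b := fun w => qstar R n k x w)); last first.
  move=> w _; case: ifP => // hw; rewrite qstar_zero //; move=> [r hr ew].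
  move/negbT: hw => /negP; apply; rewrite in_setE; exists r => //; rewrite ew.
have h0 : forall N w, (0 <= (hit R n k N x w)%:E)%E by move=> N w; rewrite lee_fin hit_ge0.
rewrite /qstar.
under eq_esum do rewrite nneseries_esumT //.
rewrite esum_swap // -nneseries_esumT; last by move=> N; apply: esum_ge0.
exact: (total_hit R hn hk nz_x_pos).
Qed.

End Main.

Theorem lemma7p3 (R : realType) (n k : nat) (j : nat) (x : vec n.-1) :
  (3 <= n)%N -> (n <= k)%N -> (1 <= j <= n.-1)%N ->
  (forall i : 'I_n.-1, (i < j)%N -> x i = 0%N) ->
  (forall i : 'I_n.-1, (j <= i)%N -> (1 <= x i)%N) ->
  [/\ forall r : vec n.-1, inEj j r -> inSstar (vadd x r),
      forall r : vec n.-1, inEj j r ->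
        qstar R n k x (vadd x r) = (qformula R n k j r)%:E,
      esum [set r : vec n.-1 | inEj j r] (fun r => qstar R n k x (vadd x r)) = 1%E
    & forall x' : vec n.-1, inSstar x' ->
        ~ (exists2 r : vec n.-1, inEj j r & x' = vadd x r) ->
        qstar R n k x x' = 0%E].
Proof.
move=> hn hk hj hx0 hx1; split.
- exact: part1.
- exact: part2.
- exact: part3.
- move=> x2 _ h; exact: (qstar_zero R hn hk hj hx0 hx1 h).
Qed.
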